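(* For $a>0$ and $y>1$ let $\bar F(y,a)=y^{\sqrt a}\exp\!\big(-a(y^{1/\sqrt a}-1)\big)$. Then for every fixed $y>1$, the map $a\mapsto \bar F(y,a)$ is strictly increasing on $(0,\infty)$. Equivalently, if $Y_a=(1+X_a)^{\sqrt a}$ where $X_a$ has density $a t\,e^{-a t}(1+t)^{a-1}$ on $t>0$, then the family $\{Y_a\}_{a>0}$ is strictly increasing in the usual stochastic order: $\Pr\{Y_a>y\}<\Pr\{Y_b>y\}$ for all $y>1$ whenever $0<a<b$. *)

(* Defs.v *)
From Stdlib Require Import Reals.
Open Scope R_scope.

Definition Fbar (y a : R) : R :=
  Rpower y (sqrt a) * exp (- a * (Rpower y (/ sqrt a) - 1)).

(* Main.v *)
Require Import Defs.
From Stdlib Require Import Reals Lra.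
From Coquelicot Require Import Coquelicot.
Open Scope R_scope.

Definition h (u:R) := 2*exp u - 2 - u - u*exp u.
Definition h1 (u:R) := exp u * (1-u) - 1.
Definition g (u:R) := (u - exp u + 1)/u^2.

Lemma h1_neg u : 0 < u -> h1 u < 0.
Proof.
intros Hu.
destruct (MVT_cor2 h1 (fun t => - t * exp t) 0 u Hu) as [c [Hc1 Hc2]].
{ intros c _. apply is_derive_Reals. unfold h1. auto_derive; auto. ring. }
assert (h1 0 = 0) by (unfold h1; rewrite exp_0; ring).
assert (0 < exp c) by apply exp_pos.
assert (c * exp c > 0) by (apply Rmult_lt_0_compat; lra).
assert (- c * exp c * (u - 0) < 0).
{ replace (- c * exp c * (u - 0)) with (-(c*exp c*u)) by ring.
  assert (c*exp c*u>0) by (apply Rmult_lt_0_compat; lra). lra. }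
lra.
Qed.

Lemma h_neg u : 0 < u -> h u < 0.
Proof.
intros Hu.
destruct (MVT_cor2 h h1 0 u Hu) as [c [Hc1 Hc2]].
{ intros c _. apply is_derive_Reals. unfold h, h1. auto_derive; auto. ring. }
assert (h 0 = 0) by (unfold h; rewrite exp_0; ring).
assert (h1 c < 0) by (apply h1_neg; lra).
assert (h1 c * (u - 0) < 0).
{ assert (-(h1 c) * u > 0) by (apply Rmult_lt_0_compat; lra). lra. }
lra.
Qed.

Lemma g_dec u v : 0 < u -> u < v -> g v < g u.
Proof.
intros Hu Huv.
destruct (MVT_cor2 g (fun t => h t / t^3) u v Huv) as [c [Hc1 Hc2]].
{ intros c Hc. apply is_derive_Reals. unfold g, h. auto_derive.
  - intro Hz. assert (c*c>0) by (apply Rmult_lt_0_compat; lra). nra.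
  - field. lra. }
assert (h c < 0) by (apply h_neg; lra).
assert (c^3 > 0) by (apply pow_lt; lra).
assert (h c / c^3 < 0).
{ unfold Rdiv. assert (/ c^3 > 0) by (apply Rinv_0_lt_compat; lra).
  assert (-(h c) * / c^3 > 0) by (apply Rmult_lt_0_compat; lra). lra. }
assert (h c / c^3 * (v - u) < 0).
{ assert (-(h c / c^3) * (v-u) > 0) by (apply Rmult_lt_0_compat; lra). lra. }
lra.
Qed.

Lemma Fbar_eq y a : 1 < y -> 0 < a ->
  Fbar y a = exp ((ln y)^2 * g (ln y / sqrt a)).
Proof.
intros Hy Ha. unfold Fbar, Rpower.
assert (Hs : 0 < sqrt a) by (apply sqrt_lt_R0; lra).
assert (HL : 0 < ln y) by (rewrite <- ln_1; apply ln_increasing; lra).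
rewrite <- exp_plus. f_equal.
replace (/ sqrt a * ln y) with (ln y / sqrt a) by (field; lra).
pattern a at 2. rewrite <- (sqrt_sqrt a) by lra.
unfold g. field. split; lra.
Qed.

Theorem mainTheorem5 :
  forall y : R, 1 < y ->
  forall a b : R, 0 < a -> a < b -> Fbar y a < Fbar y b.
Proof.
intros y Hy a b Ha Hab.
rewrite !Fbar_eq by lra.
assert (Hs : 0 < sqrt a) by (apply sqrt_lt_R0; lra).
assert (Hst : sqrt a < sqrt b) by (apply sqrt_lt_1; lra).
assert (HL : 0 < ln y) by (rewrite <- ln_1; apply ln_increasing; lra).
apply exp_increasing.
apply Rmult_lt_compat_l. { apply pow_lt; lra. }
apply g_dec.
- unfold Rdiv. apply Rmult_lt_0_compat; [lra|]. apply Rinv_0_lt_compat; lra.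
- unfold Rdiv. apply Rmult_lt_compat_l; [lra|]. apply Rinv_lt_contravar; [nra|lra].
Qed.
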